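(* Let $\Sigma_0$ be an $n\times n$ symmetric positive definite matrix and apply the MRA-lp procedure (described in the context) to $\Sigma_0$. Suppose that for every $m\in\{1,\dots,M\}$ and every multi-index $(j_1,\dots,j_m)$, the matrix $\Phi_{j_1,\dots,j_m}$ satisfies $$\mathrm{R}\big(\Phi_{j_1,\dots,j_m}^{\top}\big)\cap \mathrm{R}\big(V^m_{j_1,\dots,j_m}\big)^{\perp}=\{\mathbf 0\},$$ where $\mathrm{R}(\cdot)$ denotes column space and $\perp$ the orthogonal complement (the condition being imposed at each step $m$ once $V^m_{j_1,\dots,j_m}$ has been formed). Then the procedure is well defined, $V^m_{j_1,\dots,j_m}$ is positive semidefinite for all $m=1,\dots,M$ and all multi-indices, and $\widehat V^m_{j_1,\dots,j_m}$ is positive definite for all $m=0,\dots,M$ and all multi-indices (so that $(\widehat V^m_{j_1,\dots,j_m})^{-1}$ and $(\widehat V^m_{j_1,\dots,j_m})^{-1/2}$ exist).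
   Context: Let $n\ge 1$ and $I_0=\{1,\dots,n\}$ index grid points. Fix $M\ge 0$ and integers $J_1,\dots,J_M\ge 2$. For $m\in\{0,\dots,M\}$ a multi-index is $(j_1,\dots,j_m)$ with $1\le j_i\le J_i$; for $m=0$ it is the empty multi-index, written $0$. Index sets $I_{j_1,\dots,j_m}\subseteq I_0$ are given with $I_0$ at $m=0$ and, for $m<M$, $I_{j_1,\dots,j_m}$ equal to the disjoint union of $I_{j_1,\dots,j_m,j_{m+1}}$ over $j_{m+1}=1,\dots,J_{m+1}$. Indices are ordered so that if $(j_1,\dots,j_M)$ is lexicographically greater than $(i_1,\dots,i_M)$ then $\min I_{j_1,\dots,j_M}>\max I_{i_1,\dots,i_M}$. Knot sets $K_{j_1,\dots,j_m}\subseteq I_{j_1,\dots,j_m}$ have $r_{j_1,\dots,j_m}$ elements. For each multi-index, $\Phi_{j_1,\dots,j_m}$ is a real $r'_{j_1,\dots,j_m}\times r_{j_1,\dots,j_m}$ matrix of rank $r'_{j_1,\dots,j_m}$ ($1\le r'_{j_1,\dots,j_m}\le r_{j_1,\dots,j_m}$) whose rows have Euclidean norm 1. For a matrix $C$ and index sets $A,A'$, $C[A,A']$ is the submatrix with rows in $A$ and columns in $A'$ (in increasing order). For a positive definite $S$, $S^{-1/2}$ is the inverse of its symmetric positive definite square root. MRA-lp procedure applied to an $n\times n$ symmetric positive definite $\Sigma_0$: (i) $W^0_0=\Sigma_0[I_0,K_0]$, $V^0_0=\Sigma_0[K_0,K_0]$, $\widehat V^0_0=\Phi_0V^0_0\Phi_0^\top$,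 $B_0=W^0_0\Phi_0^\top(\widehat V^0_0)^{-1/2}$. (ii) For $0\le k<m\le M$, $W^k_{j_1,\dots,j_m}$ is obtained from $W^k_{j_1,\dots,j_k}$ (whose rows are indexed by $I_{j_1,\dots,j_k}$) by keeping the rows in $I_{j_1,\dots,j_m}$, and $V^k_{j_1,\dots,j_m}$ by keeping the rows in $K_{j_1,\dots,j_m}$. (iii) For $m=1,\dots,M$ recursively: $W^m_{j_1,\dots,j_m}=\Sigma_0[I_{j_1,\dots,j_m},K_{j_1,\dots,j_m}]-\sum_{k=0}^{m-1}W^k_{j_1,\dots,j_m}\Phi_{j_1,\dots,j_k}^\top(\widehat V^k_{j_1,\dots,j_k})^{-1}\Phi_{j_1,\dots,j_k}(V^k_{j_1,\dots,j_m})^\top$; $V^m_{j_1,\dots,j_m}$ = rows of $W^m_{j_1,\dots,j_m}$ indexed by $K_{j_1,\dots,j_m}$; $\widehat V^m_{j_1,\dots,j_m}=\Phi_{j_1,\dots,j_m}V^m_{j_1,\dots,j_m}\Phi_{j_1,\dots,j_m}^\top$; $B_{j_1,\dots,j_m}=W^m_{j_1,\dots,j_m}\Phi_{j_1,\dots,j_m}^\top(\widehat V^m_{j_1,\dots,j_m})^{-1/2}$. (iv) Output $B=(B^M\;B^{M-1}\;\cdots\;B^0)$, where $B^m$ is the $n$-row block diagonal matrix with diagonal blocks $B_{j_1,\dots,j_m}$ arranged in lexicographic order of $(j_1,\dots,j_m)$ (block $B_{j_1,\dots,j_m}$ occupying rows $I_{j_1,\dots,j_m}$). *)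

(* Defs.v *)
From HB Require Import structures.
From mathcomp Require Import all_boot all_order all_algebra.
Set Implicit Arguments. Unset Strict Implicit. Unset Printing Implicit Defensive.
Import Order.TTheory GRing.Theory Num.Theory.
Local Open Scope ring_scope.

(* Multi-indices (j_1,...,j_m) are sequences of naturals; the empty
   sequence [::] is the root multi-index 0.  Grid points are 'I_n
   (grid point i+1 of the paper is the ordinal i). *)

Definition valid_mi (M : nat) (J : nat -> nat) (a : seq nat) : bool :=
  (size a <= M)%N &&
  all (fun p => (1 <= nth 0%N a p <= J p.+1)%N) (iota 0 (size a)).

Fixpoint lexlt (a b : seq nat) : bool :=
  match a, b with
  | x :: a', y :: b' => (x < y)%N || ((x == y) && lexlt a' b')
  | _, _ => false
  end.

Definition psdmx (R : realFieldType) (m : nat) (A : 'M[R]_m) : Prop :=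
  A^T = A /\ forall x : 'cV[R]_m, 0 <= (x^T *m A *m x) ord0 ord0.
Definition pdmx (R : realFieldType) (m : nat) (A : 'M[R]_m) : Prop :=
  A^T = A /\ forall x : 'cV[R]_m, x != 0 -> 0 < (x^T *m A *m x) ord0 ord0.

Section MRA.
Variables (R : realFieldType) (n : nat) (Sigma0 : 'M[R]_n).
Variables (K : seq nat -> {set 'I_n}) (r' : seq nat -> nat).
Variable Phi : forall a : seq nat, 'M[R]_(r' a, #|K a|).

Definition kv (a : seq nat) (c : 'I_#|K a|) : 'I_n := enum_val c.

(* A "W-type" matrix is represented as a function of (row grid point,
   column grid point); W^k_{j_1..j_m} has rows I_{j_1..j_m} and columns
   K_{j_1..j_k}. *)
Definition Wfun := 'I_n -> 'I_n -> R.

Definition Vsub (a : seq nat) (W : Wfun) : 'M[R]_(#|K a|) :=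
  \matrix_(c, d) W (kv c) (kv d).

Definition Vhat_of (a : seq nat) (W : Wfun) : 'M[R]_(r' a) :=
  Phi a *m Vsub a W *m (Phi a)^T.

Definition rowW (b : seq nat) (W : Wfun) (i : 'I_n) : 'rV[R]_(#|K b|) :=
  \row_c W i (kv c).

Definition Tterm (b : seq nat) (W : Wfun) : Wfun := fun i x =>
  (rowW b W i *m (Phi b)^T *m invmx (Vhat_of b W) *m Phi b
     *m (rowW b W x)^T) ord0 ord0.

Definition W0 : Wfun := fun _ _ => 0.

(* Wlevels m a = [:: W^0_{0}; W^1_{a|1}; ...; W^m_{a|m}] where a|k is the
   prefix of length k of a (all as functions of grid points). *)
Fixpoint Wlevels (m : nat) (a : seq nat) : seq Wfun :=
  match m with
  | 0 => [:: fun i x => Sigma0 i x]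
  | m'.+1 =>
      let L := Wlevels m' a in
      rcons L (fun i x => Sigma0 i x
                 - \sum_(k < m'.+1) Tterm (take k a) (nth W0 L k) i x)
  end.

(* W^m_{j_1..j_m} for a = (j_1..j_m) (only entries with rows in I_a and
   columns in K_a are meaningful) *)
Definition Wmat (a : seq nat) : Wfun := nth W0 (Wlevels (size a) a) (size a).

Definition Vmat (a : seq nat) : 'M[R]_(#|K a|) := Vsub a (Wmat a).

Definition Vhat (a : seq nat) : 'M[R]_(r' a) := Vhat_of a (Wmat a).

End MRA.

(* Main.v *)
Require Import Defs.
From HB Require Import structures.
From mathcomp Require Import all_boot all_order all_algebra.
From Stdlib Require Import FunctionalExtensionality.
From mathcomp Require Import lra zify.
Set Implicit Arguments. Unset Strict Implicit. Unset Printing Implicit Defensive.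
Import Order.TTheory GRing.Theory Num.Theory.
Local Open Scope ring_scope.

Section Gen.
Variable R : realFieldType.

Lemma psd_cong m p (W : 'M[R]_m) (B : 'M[R]_(m, p)) :
  psdmx W -> psdmx (B^T *m W *m B).
Proof.
case=> Ws Wp; split.
  by rewrite !trmx_mul trmxK Ws mulmxA.
move=> x; have := Wp (B *m x).
by rewrite trmx_mul !mulmxA.
Qed.

Lemma pd_psd m (W : 'M[R]_m) : pdmx W -> psdmx W.
Proof.
case=> Ws Wp; split => // x.
have [->|nz] := eqVneq x 0; first by rewrite mulmx0 mxE.
exact/ltW/Wp.
Qed.

Lemma cv_norm0 m (y : 'cV[R]_m) : (y^T *m y) ord0 ord0 = 0 -> y = 0.
Proof.
rewrite mxE => /eqP; rewrite psumr_eq0 => [/allP H|i _].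
  apply/matrixP => i j; rewrite (ord1 j) mxE.
  have := H i (mem_index_enum _); rewrite !mxE -expr2 => /implyP/(_ isT).
  by rewrite sqrf_eq0 => /eqP.
by rewrite !mxE -expr2 sqr_ge0.
Qed.

Lemma psd_zero m (V : 'M[R]_m) (v : 'cV[R]_m) :
  psdmx V -> (v^T *m V *m v) ord0 ord0 = 0 -> V *m v = 0.
Proof.
case=> Vs Vp h0.
set y := V *m v.
have yT : y^T = v^T *m V by rewrite /y trmx_mul Vs.
have key : forall t : R, 0 <= t * (2 * (y^T *m y) ord0 ord0) + t ^+ 2 * (y^T *m V *m y) ord0 ord0.
  move=> t; have := Vp (v + t *: y).
  have -> : (v + t *: y)^T = v^T + t *: y^T by rewrite [LHS]linearD /= [X in _ + X]linearZ.
  rewrite !mulmxDl !mulmxDr -!scalemxAl -!scalemxAr.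
  have e1 : v^T *m V *m y = y^T *m y by rewrite yT.
  have e2 : y^T *m V *m v = y^T *m y by rewrite -mulmxA.
  rewrite e1 e2; move: (v^T *m V *m v) (y^T *m y) (y^T *m V *m y) h0 => A B C hA.
  rewrite !mxE hA => h; rewrite expr2; nra.
apply: cv_norm0.
have cge : 0 <= (y^T *m V *m y) ord0 ord0 := Vp y.
move: key cge; move: ((y^T *m y) ord0 ord0) ((y^T *m V *m y) ord0 ord0) => b c key cge.
have c1 : 0 < c + 1 by lra.
have := key (- (b / (c + 1))).
have hb : b = (b / (c + 1)) * (c + 1) by rewrite mulfVK // gt_eqF.
move: (b / (c + 1)) hb => s -> h.
have : s ^+ 2 * (c + 2) <= 0 by rewrite expr2 in h *; nra.
move=> h2; have : s ^+ 2 <= 0.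
  rewrite -(pmulr_lle0 _ (_ : 0 < c + 2)) //; lra.
rewrite le_eqVlt ltNge sqr_ge0 orbF sqrf_eq0 => /eqP ->; by rewrite mul0r.
Qed.

Lemma pd_unit m (H : 'M[R]_m) : pdmx H -> H \in unitmx.
Proof.
case=> _ Hp; rewrite -row_free_unit; apply: inj_row_free => v vH.
apply/eqP; apply: contraT => nz.
have : v^T != 0 by apply: contra nz => /eqP h; rewrite -[v]trmxK h linear0.
move/Hp; by rewrite trmxK vH mul0mx mxE ltxx.
Qed.

Lemma step_psd m r (W : 'M[R]_m) (B : 'M[R]_(m, r)) :
  psdmx W -> (B^T *m W *m B) \in unitmx ->
  psdmx (W - W *m B *m invmx (B^T *m W *m B) *m B^T *m W^T).
Proof.
case=> Ws Wp Hu; set H := B^T *m W *m B.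
have Hs : H^T = H by rewrite /H !trmx_mul trmxK Ws mulmxA.
have HiT : (invmx H)^T = invmx H by rewrite trmx_inv Hs.
set C := B *m invmx H *m B^T *m W.
have e1 : W *m B *m invmx H *m B^T *m W^T = W *m C by rewrite Ws /C !mulmxA.
have CT : C^T *m W = W *m C.
  by rewrite /C !trmx_mul trmxK HiT Ws !mulmxA.
have CC : W *m C *m C = W *m C.
  have e : W *m B *m invmx H *m B^T *m W *m B = W *m B *m invmx H *m H.
    by rewrite /H !mulmxA.
  by rewrite /C !mulmxA e -(mulmxA _ (invmx H) H) mulVmx // mulmx1.
have eQ : W - W *m C = (1%:M - C)^T *m W *m (1%:M - C).
  have -> : (1%:M - C)^T = 1%:M - C^T by rewrite [LHS]linearB /= trmx1.
  rewrite mulmxBl mul1mx CT mulmxDr mulmxN mulmx1 mulmxBl CC.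
  by rewrite subrr subr0.
rewrite e1 eQ; split.
  by rewrite !trmx_mul trmxK Ws mulmxA.
move=> x; have := Wp ((1%:M - C) *m x).
by rewrite trmx_mul !mulmxA.
Qed.

Lemma pd_lemma m r (V : 'M[R]_m) (P : 'M[R]_(r, m)) :
  psdmx V -> row_free P ->
  (forall u : 'cV[R]_r, (forall w : 'cV[R]_m, (P^T *m u)^T *m (V *m w) = 0) ->
     P^T *m u = 0) ->
  pdmx (P *m V *m P^T).
Proof.
move=> Vpsd Pf nd; have [Vs Vp] := Vpsd; split.
  by rewrite !trmx_mul trmxK Vs mulmxA.
move=> u nz.
have ev : u^T *m (P *m V *m P^T) *m u = (P^T *m u)^T *m V *m (P^T *m u).
  by rewrite trmx_mul trmxK !mulmxA.
rewrite ev lt_def Vp andbT; apply/eqP => h0.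
have Vv := psd_zero Vpsd h0.
have : P^T *m u = 0.
  apply: nd => w; by rewrite mulmxA -Vs -trmx_mul Vv linear0 mul0mx.
move=> /(congr1 trmx); rewrite trmx_mul trmxK linear0 => /eqP.
rewrite mulmx_free_eq0 // => /eqP h.
by move: nz; rewrite -[u]trmxK h linear0 eqxx.
Qed.
End Gen.
Section MRAlem.
Variables (R : realFieldType) (n : nat) (Sigma0 : 'M[R]_n).
Variables (K : seq nat -> {set 'I_n}) (r' : seq nat -> nat).
Variable Phi : forall a : seq nat, 'M[R]_(r' a, #|K a|).

Definition Wm (W : 'I_n -> 'I_n -> R) : 'M[R]_n := \matrix_(i, x) W i x.
Definition Sel (a : seq nat) : 'M[R]_(n, #|K a|) := \matrix_(i, c) (i == kv c)%:R.
Definition Bm (a : seq nat) : 'M[R]_(n, r' a) := Sel a *m (Phi a)^T.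

Lemma mulSel p a (M : 'M[R]_(p, n)) i c : (M *m Sel a) i c = M i (kv c).
Proof.
rewrite mxE (bigD1 (kv c)) //= mxE eqxx mulr1 big1 ?addr0 // => j /negbTE jn.
rewrite mxE; case: eqP => [e|_]; [by rewrite e eqxx in jn | by rewrite mulr0].
Qed.

Lemma SelTS a : (Sel a)^T *m Sel a = 1%:M.
Proof.
apply/matrixP => c d; rewrite mulSel !mxE.
by rewrite /kv (inj_eq enum_val_inj) eq_sym.
Qed.

Lemma Vsub_eq a W : Vsub K a W = (Sel a)^T *m Wm W *m Sel a.
Proof.
apply/matrixP => c d; rewrite mulSel mxE.
rewrite mxE (bigD1 (kv c)) //= !mxE eqxx mul1r big1 ?addr0 // => j /negbTE jn.
rewrite !mxE; case: eqP => [e|_]; [by rewrite e eqxx in jn | by rewrite mul0r].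
Qed.

Lemma Vhat_of_eq a W : Vhat_of Phi a W = (Bm a)^T *m Wm W *m Bm a.
Proof. by rewrite /Vhat_of Vsub_eq /Bm trmx_mul trmxK !mulmxA. Qed.

Lemma Tterm_eq b W i x : Tterm Phi b W i x =
  (Wm W *m Bm b *m invmx (Vhat_of Phi b W) *m (Bm b)^T *m (Wm W)^T) i x.
Proof.
have rw : forall y, rowW K b W y = row y (Wm W *m Sel b).
  by move=> y; apply/matrixP => u c; rewrite [RHS]mxE mulSel /rowW /Wm !mxE.
have rr : forall q (A C : 'M[R]_(n, q)),
    row i (A *m (row x C)^T) ord0 ord0 = (A *m C^T) i x.
  by move=> q A C; rewrite !mxE; apply: eq_bigr => k _; rewrite ?mxE.
by rewrite /Tterm !rw -!row_mul rr /Bm !trmx_mul trmxK !mulmxA.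
Qed.


Notation WL := (Wlevels Sigma0 Phi).
Notation WW0 := (W0 R (n:=n)).

Lemma size_Wlevels k a : size (WL k a) = k.+1.
Proof. by elim: k => //= k IH; rewrite size_rcons IH. Qed.

Lemma WL_S k a : WL k.+1 a = rcons (WL k a) (fun i x => Sigma0 i x
                 - \sum_(j < k.+1) Tterm Phi (take j a) (nth WW0 (WL k a) j) i x).
Proof. by []. Qed.

Lemma Wlevels_rec k a : nth WW0 (WL k.+1 a) k.+1 =
  fun i x => nth WW0 (WL k a) k i x - Tterm Phi (take k a) (nth WW0 (WL k a) k) i x.
Proof.
case: k => [|k].
  apply: functional_extensionality => i; apply: functional_extensionality => x.
  by rewrite /= big_ord1.
rewrite WL_S nth_rcons size_Wlevels ltnn eqxx.
rewrite [WL k.+1 a]WL_S [nth _ (rcons _ _) k.+1]nth_rcons size_Wlevels ltnn eqxx.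
apply: functional_extensionality => i; apply: functional_extensionality => x.
rewrite big_ord_recr /= opprD addrA.
rewrite [nth _ _ k.+1]nth_rcons size_Wlevels ltnn eqxx.
apply: f_equal2 => //; apply: f_equal2 => //; apply: f_equal.
apply: eq_bigr => j _.
by rewrite nth_rcons size_Wlevels ltn_ord.
Qed.

Lemma Wlevels_take k a b : take k a = take k b -> WL k a = WL k b.
Proof.
elim: k => [//|k IH] e /=.
have ek : take k a = take k b.
  by rewrite -(take_takel _ (leqnSn k)) e take_takel.
rewrite IH //; congr rcons.
apply: functional_extensionality => i; apply: functional_extensionality => x.
congr (_ - _); apply: eq_bigr => j _.
have ej : take j a = take j b.
  by rewrite -(take_takel _ (ltnW (ltn_ord j))) e take_takel // ltnW.
by rewrite ej.
Qed.


Lemma valid_take M J a k : valid_mi M J a -> valid_mi M J (take k a).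
Proof.
case/andP => sz /allP H; apply/andP; split.
  by rewrite size_take_min; apply: leq_trans sz; apply: geq_minr.
apply/allP => p; rewrite mem_iota add0n size_take_min leq_min => /andP [_ /andP [hk hpa]].
rewrite nth_take //; apply: H; by rewrite mem_iota add0n.
Qed.

Lemma Wm_sig : Wm (fun i x => Sigma0 i x) = Sigma0.
Proof. by apply/matrixP => i j; rewrite mxE. Qed.

Lemma Wm_rec k a : Wm (nth WW0 (WL k.+1 a) k.+1) =
  let W := Wm (nth WW0 (WL k a) k) in
  let B := Bm (take k a) in
  W - W *m B *m invmx (B^T *m W *m B) *m B^T *m W^T.
Proof.
rewrite Wlevels_rec /=; apply/matrixP => i x.
by rewrite [in LHS]mxE Tterm_eq Vhat_of_eq !mxE.
Qed.

Variables (M : nat) (J : nat -> nat).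
Hypothesis Hrank : forall a, valid_mi M J a -> \rank (Phi a) = r' a.
Hypothesis HS : pdmx Sigma0.
Hypothesis Hnd : forall a, valid_mi M J a -> (1 <= size a)%N ->
     forall u : 'cV[R]_(r' a),
       (forall w : 'cV[R]_(#|K a|),
          ((Phi a)^T *m u)^T *m (Vmat Sigma0 Phi a *m w) = 0) ->
       (Phi a)^T *m u = 0.

Lemma pd_level a k : valid_mi M J a -> (k <= size a)%N ->
  psdmx (Wm (nth WW0 (WL k a) k)) ->
  pdmx (Vhat_of Phi (take k a) (nth WW0 (WL k a) k)).
Proof.
move=> va ka Wpsd; have vt := valid_take k va.
rewrite /Vhat_of; apply: pd_lemma.
- by rewrite Vsub_eq; apply: psd_cong.
- by rewrite /row_free Hrank.
case: k ka Wpsd vt => [|k] ka Wpsd vt u nd.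
  set v := (Phi (take 0 a))^T *m u.
  apply/eqP; apply: contraT => nz.
  have := nd v; rewrite Vsub_eq /= Wm_sig !mulmxA => h.
  have Sv : Sel (take 0 a) *m v != 0.
    apply: contra nz => /eqP h0.
    by rewrite -[v]mul1mx -(SelTS (take 0 a)) -mulmxA h0 mulmx0.
  have := HS.2 _ Sv.
  by rewrite trmx_mul !mulmxA h mxE ltxx.
have szt : size (take k.+1 a) = k.+1 by rewrite size_take_min; apply/minn_idPl.
apply: Hnd; [done | by rewrite szt | move=> w].
rewrite /Vmat /Wmat szt (Wlevels_take (k := k.+1) (b := a)) ?take_takel //.
Qed.

Lemma main_inv a : valid_mi M J a -> forall k, (k <= size a)%N ->
  psdmx (Wm (nth WW0 (WL k a) k)) /\
  pdmx (Vhat_of Phi (take k a) (nth WW0 (WL k a) k)).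
Proof.
move=> va; elim=> [|k IH] ka.
  have ps : psdmx (Wm (nth WW0 (WL 0 a) 0)) by rewrite /= Wm_sig; apply: pd_psd.
  by split => //; apply: pd_level.
have [ps pd] := IH (ltnW ka).
have ps' : psdmx (Wm (nth WW0 (WL k.+1 a) k.+1)).
  rewrite Wm_rec /=; apply: step_psd => //.
  by rewrite -Vhat_of_eq; apply: pd_unit.
by split => //; apply: pd_level.
Qed.

End MRAlem.

Theorem proposition1
  (R : realFieldType) (n M : nat) (J : nat -> nat)
  (I : seq nat -> {set 'I_n}) (K : seq nat -> {set 'I_n})
  (r' : seq nat -> nat) (Phi : forall a : seq nat, 'M[R]_(r' a, #|K a|))
  (Sigma0 : 'M[R]_n) :
  (1 <= n)%N ->
  (forall k, (1 <= k <= M)%N -> (2 <= J k)%N) ->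
  (* hierarchical partition of the grid *)
  I [::] = [set: 'I_n] ->
  (forall a, valid_mi M J a -> (size a < M)%N ->
     I a = \bigcup_(1 <= k < (J (size a).+1).+1) I (rcons a k)) ->
  (forall a, valid_mi M J a -> (size a < M)%N ->
     forall k1 k2, (1 <= k1 <= J (size a).+1)%N ->
       (1 <= k2 <= J (size a).+1)%N -> k1 != k2 ->
     [disjoint I (rcons a k1) & I (rcons a k2)]) ->
  (* ordering of the finest index sets *)
  (forall a b, valid_mi M J a -> valid_mi M J b -> size a = M -> size b = M ->
     lexlt b a -> forall x y, x \in I a -> y \in I b -> (val y < val x)%N) ->
  (* knot sets *)
  (forall a, valid_mi M J a -> K a \subset I a) ->
  (* the matrices Phi *)
  (forall a, valid_mi M J a -> (1 <= r' a <= #|K a|)%N) ->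
  (forall a, valid_mi M J a -> \rank (Phi a) = r' a) ->
  (forall a, valid_mi M J a ->
     forall p, \sum_(c < #|K a|) Phi a p c ^+ 2 = 1) ->
  (* Sigma0 symmetric positive definite *)
  pdmx Sigma0 ->
  (* R(Phi_a^T) meets R(V^m_a)^perp only in 0, for 1 <= m <= M *)
  (forall a, valid_mi M J a -> (1 <= size a)%N ->
     forall u : 'cV[R]_(r' a),
       (forall w : 'cV[R]_(#|K a|),
          ((Phi a)^T *m u)^T *m (Vmat Sigma0 Phi a *m w) = 0) ->
       (Phi a)^T *m u = 0) ->
  (forall a, valid_mi M J a -> (1 <= size a)%N -> psdmx (Vmat Sigma0 Phi a)) /\
  (forall a, valid_mi M J a -> pdmx (Vhat Sigma0 Phi a)).
Proof.
move=> _ _ _ _ _ _ _ _ Hrank _ HS Hnd; split.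
  move=> a va _; have [ps _] := main_inv Hrank HS Hnd va (leqnn (size a)).
  by rewrite /Vmat Vsub_eq; apply: psd_cong.
move=> a va; have [_ pd] := main_inv Hrank HS Hnd va (leqnn (size a)).
by move: pd; rewrite take_size.
Qed.
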